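(* Fix a query state $u\in\mathcal U$ and a level $p\in(0,1)$, and suppose the following hold. (A1, stochastic admissibility) The process $\{(U_t,E_t)\}_{t\in\mathbb Z}$ is strictly stationary. Let $\mathcal G_n(u)$ be a $\sigma$-field containing $\sigma\big(u,U_1,\dots,U_n,S_{K_n}(u),q_{1,n}(u),\dots,q_{n,n}(u)\big)$, with respect to which the weights are measurable. Define $$m_{i,n}(r;u)=\mathbb E\big[\mathbf 1\{E_i\le r\}\mid \mathcal G_n(u)\big],$$ $$D_n(u)=\sup_{r\in\mathbb R}\Big|\sum_{i=1}^n q_{i,n}(u)\{m_{i,n}(r;u)-F_{U_i}(r)\}\Big|,$$ $$R_n(u)=\sup_{r\in\mathbb R}\Big|\sum_{i=1}^n q_{i,n}(u)\big[\mathbf 1\{E_i\le r\}-m_{i,n}(r;u)\big]\Big|.$$ Assume $D_n(u)=o_p(1)$ and $R_n(u)\big/\big(\sum_{i=1}^n q_{i,n}(u)^2\big)^{1/2}=O_p(1)$. (A2, localization and weight size) $K_n\to\infty$, $K_n/n\to 0$, $h_n(u)\to 0$ in probability, and $\sum_{i=1}^n q_{i,n}(u)^2=O_p(K_n^{-1})$. (A3, local continuity and quantile identification) The local CDF modulus $$\omega_u(h)=\sup_{v\in\mathcal U,\ \|v-u\|_2\le h}\ \sup_{r\in\mathbb R}|F_v(r)-F_u(r)|$$ satisfies $\omega_u(h)\to0$ as $h\downarrow 0$; moreover $\xi^\star_{u,p}=\inf\{r:F_u(r)\ge p\}$ is finite, $F_u$ is continuous at $\xi^\star_{u,p}$, $F_u(\xi^\star_{u,p})=p$,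 and for every $\varepsilon>0$, $F_u(\xi^\star_{u,p}-\varepsilon)<p<F_u(\xi^\star_{u,p}+\varepsilon)$. Then $\Delta_n(u):=\sup_{r\in\mathbb R}|\widehat F_n(r\mid u)-F_u(r)|$ satisfies $$\Delta_n(u)\le R_n(u)+D_n(u)+\omega_u(h_n(u)),$$ $R_n(u)=O_p(K_n^{-1/2})$, and hence $\Delta_n(u)\to 0$ in probability. Consequently $\widehat\xi_{n,p}(u)\to \xi^\star_{u,p}$ in probability and $F_u(\widehat\xi_{n,p}(u))\to p$ in probability. If in addition $\widehat\xi_{n,p}(u)\to\xi^\star_{u,p}$ in probability under the joint conditional law $\mathcal L\big((U_i,E_i)_{i\le n},E_\star\mid U_\star=u\big)$ of the calibration data and a target residual $E_\star$ given target state $U_\star=u$, then $$\mathbb P\big(E_\star\le \widehat\xi_{n,p}(u)\mid U_\star=u\big)\to p,$$ and in particular, with $p=1-\alpha$ and $Y_\star=\widehat y_\star+E_\star$, the one-sided set $\widehat C^\alpha_{n,+}=(-\infty,\ \widehat y_\star+\widehat\xi_{n,1-\alpha}(U_\star)]$ satisfies $\mathbb P(Y_\star\in\widehat C^\alpha_{n,+}\mid U_\star=u)\to 1-\alpha$.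
   Context: Setting: $(U_t,E_t)_{t\in\mathbb Z}$ is a random process where $U_t=\widetilde Z_t/\|\widetilde Z_t\|_2\in\mathbb S^{d-1}$ is a normalized learned state ($\widetilde Z_t=\phi(A_t)\in\mathbb R^d$ with $\|\widetilde Z_t\|_2>0$ a.s., $\phi$ a fixed map chosen independently of the calibration residual labels), and $E_t=Y_t-\widehat y_t$ is a signed residual of a fixed forecasting rule $\widehat y_t$. Let $\mathcal U=\operatorname{supp}(U_t)$. For $v\in\mathcal U$, $F_v(r)=\mathbb P(E_\star\le r\mid U_\star=v)$ is a fixed regular conditional version of the conditional CDF of the residual given the state. Calibration indices are $\mathcal I_n=\{1,\dots,n\}$, and $K_n$ is a deterministic integer sequence with $1\le K_n\le n$ eventually. Retrieval: for a query $u\in\mathbb S^{d-1}$, $S_{K_n}(u)$ is the set of $K_n$ indices $i\in\mathcal I_n$ with largest cosine scores $U_i^\top u$ (ties broken by a deterministic rule depending only on the states, not on residuals); its radius is $h_n(u)=\max_{i\in S_{K_n}(u)}\|U_i-u\|_2$. Weights $q_{i,n}(u)\ge0$ satisfy $\sum_i q_{i,n}(u)=1$ and $q_{i,n}(u)=0$ for $i\notin S_{K_n}(u)$. The weighted empirical CDF is $\widehat F_n(r\mid u)=\sum_{i=1}^n q_{i,n}(u)\mathbf 1\{E_i\le r\}$ and the weighted quantile is $\widehat\xi_{n,p}(u)=\inf\{r:\widehat F_n(r\mid u)\ge p\}$. *)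

(* Defs.v *)
From mathcomp Require Import all_boot all_order all_algebra.
From mathcomp Require Import all_classical all_reals all_analysis.
Import Order.TTheory GRing.Theory Num.Theory.
Import numFieldNormedType.Exports.

Set Implicit Arguments.
Unset Strict Implicit.
Unset Printing Implicit Defensive.

Local Open Scope classical_set_scope.
Local Open Scope ring_scope.

Section Geometry.
Variables (R : realType) (d : nat).

Definition dotv (x y : 'rV[R]_d) : R := \sum_(j < d) x ord0 j * y ord0 j.

Definition enorm (x : 'rV[R]_d) : R := Num.sqrt (dotv x x).

Definition eopen (A : set 'rV[R]_d) : Prop :=
  forall x, A x -> exists2 e : R, 0 < e &
    forall y, enorm (y - x) < e -> A y.

Definition borelV : set (set 'rV[R]_d) := <<s [set A | eopen A] >>.

End Geometry.

Section Proba.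
Variables (R : realType) (dO : measure_display) (Omega : measurableType dO).

(** Used so that "in probability" statements make sense for possibly
    non-measurable suprema (it coincides with P on measurable sets). *)
Definition outP (P : probability Omega R) (A : set Omega) : \bar R :=
  ereal_inf [set P B | B in [set B | measurable B /\ A `<=` B]].

Definition cvg_prob0 (P : probability Omega R) (X : nat -> Omega -> \bar R)
  : Prop :=
  forall eps delta : R, 0 < eps -> 0 < delta ->
    exists N : nat, forall n, (N <= n)%N ->
      (outP P [set w | (eps%:E < `|X n w|)%E] < delta%:E)%E.

Definition bounded_prob (P : probability Omega R) (X : nat -> Omega -> \bar R)
  : Prop :=
  forall delta : R, 0 < delta ->
    exists2 M : R, 0 < M & exists N : nat, forall n, (N <= n)%N ->
      (outP P [set w | (M%:E < `|X n w|)%E] < delta%:E)%E.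

Definition Gmeas (G : set (set Omega)) (Y : Omega -> R) : Prop :=
  forall B : set R, measurable B -> G (Y @^-1` B).

Definition cexp_version (P : probability Omega R) (G : set (set Omega))
  (X Y : Omega -> R) : Prop :=
  [/\ Gmeas G Y, P.-integrable setT (EFin \o Y) &
      forall A, G A ->
        (\int[P]_(w in A) (Y w)%:E = \int[P]_(w in A) (X w)%:E)%E ].

Definition rvV (d : nat) (X : Omega -> 'rV[R]_d) : Prop :=
  forall B, borelV B -> measurable (X @^-1` B).

(** Strict stationarity of (U_t, E_t)_{t in Z}: all finite-dimensional
    distributions are shift invariant (checked on measurable rectangles,
    which form a generating pi-system of the finite-dimensional
    product sigma-fields). *)
Definition strictly_stationary (P : probability Omega R) (d : nat)
  (U : int -> Omega -> 'rV[R]_d) (E : int -> Omega -> R) : Prop :=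
  forall (k : nat) (t : 'I_k -> int) (s : int)
         (B : 'I_k -> set 'rV[R]_d) (C : 'I_k -> set R),
    (forall j, borelV (B j)) -> (forall j, measurable (C j)) ->
    P [set w | forall j, B j (U (t j) w) /\ C j (E (t j) w)] =
    P [set w | forall j, B j (U (t j + s) w) /\ C j (E (t j + s) w)].

Definition supportV (P : probability Omega R) (d : nat)
  (X : Omega -> 'rV[R]_d) : set 'rV[R]_d :=
  [set v | forall e : R, 0 < e -> (0 < P [set w | (enorm (X w - v) < e)%R])%E].

End Proba.

Definition is_cdf (R : realType) (G : R -> R) : Prop :=
  [/\ {homo G : x y / x <= y},
      (forall x : R, (G y @[y --> x^'+] --> G x)),
      (G y @[y --> -oo] --> (0:R)) &
      (G y @[y --> +oo] --> (1:R))].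

Section Retrieval.
Variables (R : realType) (dO : measure_display) (Omega : measurableType dO).
Variable (d : nat).

(** calibration index i : 'I_n  stands for the time  i+1 in {1,...,n}. *)
Definition cidx (n : nat) (i : 'I_n) : int := (i.+1)%:Z.

(** sel is a top-K retrieval rule: for a query x and calibration states
    s : 'I_n -> R^d, sel x n s has exactly K_n elements with largest
    cosine score s_i^T x (ties broken in any way depending only on the
    states). *)
Definition topK_rule (K : nat -> nat)
  (sel : 'rV[R]_d -> forall n, ('I_n -> 'rV[R]_d) -> {set 'I_n}) : Prop :=
  forall x n (s : 'I_n -> 'rV[R]_d), (K n <= n)%N ->
    #|sel x n s| = K n /\
    forall i j, i \in sel x n s -> j \notin sel x n s ->
      dotv (s j) x <= dotv (s i) x.

Definition Sret (U : int -> Omega -> 'rV[R]_d)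
  (sel : 'rV[R]_d -> forall n, ('I_n -> 'rV[R]_d) -> {set 'I_n})
  (x : 'rV[R]_d) (n : nat) (w : Omega) : {set 'I_n} :=
  sel x n (fun i => U (cidx i) w).

Definition hrad (U : int -> Omega -> 'rV[R]_d)
  (sel : 'rV[R]_d -> forall n, ('I_n -> 'rV[R]_d) -> {set 'I_n})
  (x : 'rV[R]_d) (n : nat) (w : Omega) : R :=
  \big[Num.max/0]_(i in Sret U sel x n w) enorm (U (cidx i) w - x).

Definition weights_ok (K : nat -> nat) (U : int -> Omega -> 'rV[R]_d)
  (sel : 'rV[R]_d -> forall n, ('I_n -> 'rV[R]_d) -> {set 'I_n})
  (q : 'rV[R]_d -> forall n, 'I_n -> Omega -> R) : Prop :=
  forall x n w, enorm x = 1 -> (1 <= K n <= n)%N ->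
    [/\ forall i, 0 <= q x n i w,
        \sum_(i < n) q x n i w = 1 &
        forall i, i \notin Sret U sel x n w -> q x n i w = 0].

Definition Fhat (E : int -> Omega -> R)
  (q : 'rV[R]_d -> forall n, 'I_n -> Omega -> R)
  (x : 'rV[R]_d) (n : nat) (w : Omega) (r : R) : R :=
  \sum_(i < n) q x n i w * ((E (cidx i) w <= r)%R)%:R.

Definition xihat (E : int -> Omega -> R)
  (q : 'rV[R]_d -> forall n, 'I_n -> Omega -> R)
  (p : R) (x : 'rV[R]_d) (n : nat) (w : Omega) : \bar R :=
  ereal_inf [set r%:E | r in [set r | p <= Fhat E q x n w r]].

Definition Deltan (E : int -> Omega -> R)
  (q : 'rV[R]_d -> forall n, 'I_n -> Omega -> R) (F : 'rV[R]_d -> R -> R)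
  (x : 'rV[R]_d) (n : nat) (w : Omega) : \bar R :=
  ereal_sup [set (`|Fhat E q x n w r - F x r|)%:E | r in [set: R]].

Definition Dn (U : int -> Omega -> 'rV[R]_d)
  (q : 'rV[R]_d -> forall n, 'I_n -> Omega -> R) (F : 'rV[R]_d -> R -> R)
  (m : forall n, 'I_n -> R -> Omega -> R)
  (x : 'rV[R]_d) (n : nat) (w : Omega) : \bar R :=
  ereal_sup [set (`|\sum_(i < n) q x n i w *
                     (m n i r w - F (U (cidx i) w) r)|)%:E | r in [set: R]].

Definition Rn (E : int -> Omega -> R)
  (q : 'rV[R]_d -> forall n, 'I_n -> Omega -> R)
  (m : forall n, 'I_n -> R -> Omega -> R)
  (x : 'rV[R]_d) (n : nat) (w : Omega) : \bar R :=
  ereal_sup [set (`|\sum_(i < n) q x n i w *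
                     (((E (cidx i) w <= r)%R)%:R - m n i r w)|)%:E
            | r in [set: R]].

Definition sumq2 (q : 'rV[R]_d -> forall n, 'I_n -> Omega -> R)
  (x : 'rV[R]_d) (n : nat) (w : Omega) : R :=
  \sum_(i < n) q x n i w ^+ 2.

End Retrieval.

Definition omega_mod (R : realType) (d : nat) (supp : set 'rV[R]_d)
  (F : 'rV[R]_d -> R -> R) (u : 'rV[R]_d) (h : R) : \bar R :=
  ereal_sup [set (`|F vr.1 vr.2 - F u vr.2|)%:E
            | vr in [set vr : 'rV[R]_d * R |
                     supp vr.1 /\ enorm (vr.1 - u) <= h]].

(* Main.v *)
Require Import Defs.
From mathcomp Require Import all_boot all_order all_algebra.
From mathcomp Require Import all_classical all_reals all_analysis.
From mathcomp Require Import ring lra.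
Import Order.TTheory GRing.Theory Num.Theory.
Import numFieldNormedType.Exports.
Local Open Scope classical_set_scope.
Local Open Scope ring_scope.

Set Implicit Arguments.
Unset Strict Implicit.
Unset Printing Implicit Defensive.

Section Geo.
Variables (R : realType) (d : nat).
Implicit Types x y : 'rV[R]_d.

Lemma dotv_ge0 x : 0 <= dotv x x.
Proof. by apply: sumr_ge0 => j _; rewrite -expr2 sqr_ge0. Qed.

Lemma enorm_ge0 x : 0 <= enorm x.
Proof. exact: sqrtr_ge0. Qed.

Lemma enorm_sq x : enorm x ^+ 2 = dotv x x.
Proof. by rewrite /enorm sqr_sqrtr // dotv_ge0. Qed.

Lemma dotvC x y : dotv x y = dotv y x.
Proof. by apply: eq_bigr => j _; rewrite mulrC. Qed.

Lemma dotvDl x y z : dotv (x + y) z = dotv x z + dotv y z.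
Proof. by rewrite /dotv -big_split; apply: eq_bigr => j _; rewrite !mxE mulrDl. Qed.

Lemma dotvNl x z : dotv (- x) z = - dotv x z.
Proof. by rewrite /dotv -sumrN; apply: eq_bigr => j _; rewrite !mxE mulNr. Qed.

Lemma dotvZl a x z : dotv (a *: x) z = a * dotv x z.
Proof. by rewrite /dotv mulr_sumr; apply: eq_bigr => j _; rewrite !mxE mulrA. Qed.

Lemma dotv0 x : dotv x x = 0 -> x = 0.
Proof.
move=> h; apply/rowP => j; rewrite mxE.
have: x ord0 j * x ord0 j = 0.
  apply/eqP; move/eqP: h; rewrite /dotv psumr_eq0; last first.
    by move=> i _; rewrite -expr2 sqr_ge0.
  by move/allP/(_ j (mem_index_enum _)) => /implyP; apply.
by move/eqP; rewrite mulf_eq0 orbb => /eqP.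
Qed.

Lemma enorm_eq0 x : enorm x = 0 -> x = 0.
Proof. by move=> h; apply: dotv0; rewrite -enorm_sq h expr0n. Qed.

Lemma enormN x : enorm (- x) = enorm x.
Proof. by rewrite /enorm dotvNl dotvC dotvNl opprK. Qed.

Lemma enormB x y : enorm (x - y) = enorm (y - x).
Proof. by rewrite -enormN opprB. Qed.

Lemma CS x y : dotv x y ^+ 2 <= dotv x x * dotv y y.
Proof.
have [y0|yn0] := eqVneq (dotv y y) 0.
  have d0 : forall z : 'rV[R]_d, dotv z 0 = 0.
    by move=> z; rewrite /dotv big1 // => j _; rewrite mxE mulr0.
  by rewrite (dotv0 y0) !d0 expr0n /= mulr0.
have ypos : 0 < dotv y y by rewrite lt_neqAle eq_sym yn0 dotv_ge0.
set t := dotv x y / dotv y y.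
have := dotv_ge0 (x - t *: y).
rewrite !(dotvDl, dotvNl, dotvZl) ![dotv _ (_ - _)]dotvC !(dotvDl, dotvNl, dotvZl).
rewrite [dotv y x]dotvC.
move=> h.
have e : dotv x x - t * dotv x y - t * (dotv x y - t * dotv y y)
   = dotv x x - dotv x y ^+ 2 / dotv y y.
  rewrite /t; field; exact: yn0.
rewrite e subr_ge0 ler_pdivrMr // in h.
Qed.

Lemma dot_le x y : dotv x y <= enorm x * enorm y.
Proof.
apply: le_trans (ler_norm _) _.
rewrite -sqrtr_sqr /enorm -sqrtrM ?dotv_ge0 // ler_sqrt ?mulr_ge0 ?dotv_ge0 //.
exact: CS.
Qed.

Lemma enormD x y : enorm (x + y) <= enorm x + enorm y.
Proof.
rewrite -(ler_pXn2r (_ : 0 < 2)%N) ?nnegrE ?addr_ge0 ?enorm_ge0 //.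
have e1 : enorm (x + y) ^+ 2 = dotv x x + 2 * dotv x y + dotv y y.
  rewrite enorm_sq dotvDl ![dotv _ (_ + _)]dotvC !dotvDl [dotv x y]dotvC; ring.
rewrite e1 sqrrD !enorm_sq; have := dot_le x y; lra.
Qed.


Definition ballV (c : 'rV[R]_d) (r : R) := [set v : 'rV[R]_d | enorm (v - c) < r].

Lemma ballV_open c r : eopen (ballV c r).
Proof.
move=> x; rewrite /ballV /= => hx; exists (r - enorm (x - c)); first by rewrite subr_gt0.
move=> y hy; rewrite /ballV /=.
have -> : y - c = (y - x) + (x - c) by rewrite addrA subrK.
apply: le_lt_trans (enormD _ _) _; rewrite -ltrBrDr; exact: hy.
Qed.

Lemma borelV_open (A : set 'rV[R]_d) : eopen A -> borelV A.
Proof. by move=> h; apply: sub_sigma_algebra. Qed.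

Lemma borelV_ball c r : borelV (ballV c r).
Proof. by apply: borelV_open; apply: ballV_open. Qed.

Lemma borelV_bigcup (A : nat -> set 'rV[R]_d) :
  (forall i, borelV (A i)) -> borelV (\bigcup_i A i).
Proof. by move=> h; apply: sigma_algebra_bigcup. Qed.

Lemma borelV0 : borelV (set0 : set 'rV[R]_d).
Proof. exact: sigma_algebra0. Qed.

Lemma borelV_set1 (u : 'rV[R]_d) : borelV [set v | v = u].
Proof.
have -> : [set v | v = u] = setT `\` [set v | v <> u].
  apply/seteqP; split => v /=; first by move=> ->; split => // /(_ erefl).
  by case=> _ /contrapT.
apply: sigma_algebraCD; apply: borelV_open => x /= hx.
exists (enorm (x - u)).
  rewrite lt_neqAle enorm_ge0 andbT eq_sym; apply/eqP => /enorm_eq0/eqP.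
  by rewrite subr_eq0 => /eqP.
by move=> y hy yu; move: hy; rewrite yu enormB ltxx.
Qed.

Lemma rat_approx (v : 'rV[R]_d) e : 0 < e ->
  exists c : 'rV[rat]_d, enorm (map_mx ratr c - v) < e.
Proof.
move=> e0.
set eta := e / (d.+1)%:R.
have eta0 : 0 < eta by rewrite divr_gt0.
have H : forall j : 'I_d, exists q : rat, `|ratr q - v ord0 j| < eta.
  move=> j; have hlt : v ord0 j - eta < v ord0 j + eta by lra.
  have [q] := rat_in_itvoo hlt.
  rewrite in_itv /= => /andP[h1 h2]; exists q.
  rewrite ltr_norml; apply/andP; split; lra.
have [f hf] := choice H.
exists (\row_j f j).
rewrite /enorm -(gtr0_norm e0) -sqrtr_sqr ltr_sqrt ?exprn_gt0 ?normr_gt0 ?gt_eqF //.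
apply: (@le_lt_trans _ _ (d%:R * eta ^+ 2)).
  rewrite (_ : d%:R * eta ^+ 2 = \sum_(j < d) eta ^+ 2); last first.
    by rewrite sumr_const card_ord mulr_natl.
  rewrite /dotv; apply: ler_sum => j _; rewrite !mxE -expr2.
  rewrite -real_normK ?num_real // lerXn2r ?nnegrE ?normr_ge0 //.
    exact: ltW.
  exact: ltW (hf j).
have hd : d%:R < (d.+1)%:R ^+ 2 :> R.
  by rewrite -natrX ltr_nat expnS; apply: (@leq_trans d.+1); [|rewrite leq_pmulr].
rewrite /eta expr_div_n mulrA ltr_pdivrMr ?exprn_gt0 ?ltr0Sn //.
by rewrite mulrC ltr_pM2l ?exprn_gt0.
Qed.

End Geo.

Section Supp.
Variables (R : realType) (d : nat) (dO : measure_display) (Omega : measurableType dO).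
Variable (P : probability Omega R).

Definition centerV (j : nat) : 'rV[R]_d :=
  if (unpickle j : option 'rV[rat]_d) is Some c then map_mx ratr c else 0.

Definition ballJK j k := ballV (centerV j) (k.+1%:R^-1).

Definition Nsupp (X : Omega -> 'rV[R]_d) : set 'rV[R]_d :=
  \bigcup_j \bigcup_k (if P (X @^-1` ballJK j k) == 0%E then ballJK j k else set0).

Lemma borelV_Nsupp X : borelV (Nsupp X).
Proof.
apply: borelV_bigcup => j; apply: borelV_bigcup => k.
by case: ifP => _; [exact: borelV_ball | exact: borelV0].
Qed.

Lemma Nsupp_null X : rvV X -> P (X @^-1` Nsupp X) = 0%E.
Proof.
move=> hX.
have mN : measurable (X @^-1` Nsupp X) by apply: hX; exact: borelV_Nsupp.
apply/negligibleP => //.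
rewrite /Nsupp preimage_bigcup; apply: negligible_bigcup => j.
rewrite preimage_bigcup; apply: negligible_bigcup => k.
case: ifP => h.
  by apply/negligibleP; [apply: hX; exact: borelV_ball | exact/eqP].
by rewrite preimage_set0; exact: negligible_set0.
Qed.

Lemma notsupp_Nsupp X : rvV X -> forall v, ~ supportV P X v -> Nsupp X v.
Proof.
move=> hX v /existsNP [e /not_implyP [e0 hP]].
have P0 : P [set w | enorm (X w - v) < e] = 0%E.
  by apply/eqP; rewrite eq_le measure_ge0 andbT leNgt; apply/negP.
set k := Num.truncn (2 / e).
have hk : 2 / e < k.+1%:R by apply: truncnS_gt.
have k0 : 0 < k.+1%:R :> R by rewrite ltr0Sn.
have hk2 : 2 * k.+1%:R^-1 < e.
  have e0' : 0 < e by [].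
  move: hk; rewrite ltr_pdivrMr // => hk.
  by rewrite ltr_pdivrMr // mulrC.
have hk1 : 0 < k.+1%:R^-1 :> R by rewrite invr_gt0.
have [c hc] := rat_approx v hk1.
exists (pickle c) => //; exists k => //.
have hcen : centerV (pickle c) = map_mx ratr c by rewrite /centerV pickleK.
have sub : ballJK (pickle c) k `<=` ballV v e.
  move=> y; rewrite /ballJK /ballV hcen /= => hy.
  have -> : y - v = (y - map_mx ratr c) + (map_mx ratr c - v) by rewrite addrA subrK.
  apply: le_lt_trans (enormD _ _) _; apply: le_lt_trans hk2.
  by rewrite mulr2n mulrDl mul1r ltW // ltrD.
have -> : P (X @^-1` ballJK (pickle c) k) == 0%E.
  have m1 : measurable (X @^-1` ballJK (pickle c) k) by apply: hX; exact: borelV_ball.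
  have m2 : measurable [set w | enorm (X w - v) < e].
    by apply: (hX (ballV v e)); exact: borelV_ball.
  rewrite eq_le measure_ge0 andbT -P0 le_measure ?inE //.
  by move=> w /= /sub.
by rewrite /ballJK /ballV hcen /= enormB.
Qed.

End Supp.

Section Outer.
Variables (R : realType) (dO : measure_display) (Omega : measurableType dO).
Variable (P : probability Omega R).
Local Open Scope ereal_scope.

Lemma outP_le (A B : set Omega) : measurable B -> A `<=` B -> outP P A <= P B.
Proof. by move=> mB AB; apply: ereal_inf_lbound; exists B. Qed.

Lemma outP_ltP (A : set Omega) a : outP P A < a ->
  exists2 B, measurable B /\ A `<=` B & P B < a.
Proof. by move=> /ereal_inf_lt [y [B hB <-] h]; exists B. Qed.

Lemma outP_ge (C : set Omega) : measurable C -> P C <= outP P C.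
Proof.
move=> mC; apply: le_ereal_inf_tmp => y [B [mB CB] <-].
by rewrite le_measure ?inE.
Qed.

Lemma outP_union (A A1 A2 : set Omega) (a1 a2 : R) :
  A `<=` A1 `|` A2 -> outP P A1 < a1%:E -> outP P A2 < a2%:E ->
  outP P A < (a1 + a2)%:E.
Proof.
move=> sA /outP_ltP [B1 [m1 s1] h1] /outP_ltP [B2 [m2 s2] h2].
apply: (@le_lt_trans _ _ (P (B1 `|` B2))).
  apply: outP_le; first exact: measurableU.
  by move=> w /sA [/s1|/s2] h; [left|right].
apply: le_lt_trans (measureU2 _ m1 m2) _.
by rewrite EFinD lteD.
Qed.

Lemma outP_null (A A1 N : set Omega) (a : R) :
  A `<=` A1 `|` N -> measurable N -> P N = 0 -> outP P A1 < a%:E ->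
  outP P A < a%:E.
Proof.
move=> sA mN N0 /outP_ltP [B1 [m1 s1] h1].
apply: (@le_lt_trans _ _ (P (B1 `|` N))).
  apply: outP_le; first exact: measurableU.
  by move=> w /sA [/s1|] h; [left|right].
apply: le_lt_trans h1.
apply: (le_trans (measureU2 _ m1 mN)).
have hN : P N <= 0 by rewrite le_eqVlt; apply/orP; left; apply/eqP; exact: N0.
by rewrite -[X in _ <= X]adde0; apply: leeD.
Qed.

Lemma outP_lt_meas (A C : set Omega) a :
  measurable C -> A `<=` C -> P C < a -> outP P A < a.
Proof. by move=> mC AC h; apply: le_lt_trans h; exact: outP_le. Qed.

End Outer.

Lemma enorm0 (R : realType) (d : nat) : enorm (0 : 'rV[R]_d) = 0.
Proof.
rewrite /enorm /dotv big1 ?sqrtr0 // => j _; by rewrite mxE mul0r.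
Qed.

Unset Implicit Arguments.
Section Core.
Variables (R : realType) (dO : measure_display) (Omega : measurableType dO).
Variable (d : nat).
Variables (U : int -> Omega -> 'rV[R]_d) (E : int -> Omega -> R).
Variable (F : 'rV[R]_d -> R -> R).
Variable (sel : 'rV[R]_d -> forall n, ('I_n -> 'rV[R]_d) -> {set 'I_n}).
Variable (q : 'rV[R]_d -> forall n, 'I_n -> Omega -> R).
Variable (m : forall n, 'I_n -> R -> Omega -> R).
Variable (u : 'rV[R]_d).

Lemma Rn_ge0 n w : (0 <= Rn E q m u n w)%E.
Proof. by apply: le_ereal_sup_tmp; eexists; [exists 0 => //|]; rewrite lee_fin. Qed.

Lemma Dn_ge0 n w : (0 <= Dn U q F m u n w)%E.
Proof. by apply: le_ereal_sup_tmp; eexists; [exists 0 => //|]; rewrite lee_fin. Qed.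

Lemma Deltan_ge0 n w : (0 <= Deltan E q F u n w)%E.
Proof. by apply: le_ereal_sup_tmp; eexists; [exists 0 => //|]; rewrite lee_fin. Qed.

Lemma hrad_ge0 n w : 0 <= hrad U sel u n w.
Proof. exact: bigmax_ge_id. Qed.

Lemma Delta_bound n w (supp : set 'rV[R]_d) :
  (forall i, 0 <= q u n i w) -> \sum_(i < n) q u n i w = 1 ->
  (forall i, i \notin Sret U sel u n w -> q u n i w = 0) ->
  (forall i : 'I_n, supp (U (cidx i) w)) -> supp u ->
  (Deltan E q F u n w <= Rn E q m u n w + Dn U q F m u n w +
     omega_mod supp F u (hrad U sel u n w))%E.
Proof.
move=> q0 q1 qS hsupp hu.
apply: ge_ereal_sup => _ [r _ <-].
set A := \sum_(i < n) q u n i w * (((E (cidx i) w <= r)%R)%:R - m n i r w).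
set B := \sum_(i < n) q u n i w * (m n i r w - F (U (cidx i) w) r).
set C := \sum_(i < n) q u n i w * (F (U (cidx i) w) r - F u r).
have eq : Fhat E q u n w r - F u r = A + B + C.
  have -> : F u r = \sum_(i < n) q u n i w * F u r by rewrite -mulr_suml q1 mul1r.
  rewrite /Fhat -sumrB /A /B /C -!big_split.
  by apply: eq_bigr => i _ /=; ring.
rewrite eq; apply: (@le_trans _ _ ((`|A| + `|B| + `|C|)%:E)).
  by rewrite lee_fin; apply: le_trans (ler_normD _ _) _; rewrite lerD2r ler_normD.
rewrite !EFinD; apply: leeD; first apply: leeD.
- by apply: ereal_sup_ubound; exists r.
- by apply: ereal_sup_ubound; exists r.
set h := hrad U sel u n w.
have hin : forall i : 'I_n, i \in Sret U sel u n w -> enorm (U (cidx i) w - u) <= h.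
  by move=> i hi; rewrite /h /hrad; apply: le_bigmax_cond.
move hom : (omega_mod supp F u h) => om; case: om hom => [ o | | ] hom; last 2 first.
- by rewrite leey.
- have : ((`|F u r - F u r|)%:E <= omega_mod supp F u h)%E.
    apply: ereal_sup_ubound; exists (u, r) => //; split => //=.
    by rewrite subrr enorm0 hrad_ge0.
  by rewrite hom.
have ho : forall i : 'I_n, i \in Sret U sel u n w ->
    `|F (U (cidx i) w) r - F u r| <= o.
  move=> i hi; rewrite -lee_fin -hom.
  by apply: ereal_sup_ubound; exists (U (cidx i) w, r) => //; split => //=; apply: hin.
rewrite lee_fin /C; apply: le_trans (ler_norm_sum _ _ _) _.
apply: (@le_trans _ _ (\sum_(i < n) q u n i w * o)); last by rewrite -mulr_suml q1 mul1r.
apply: ler_sum => i _; rewrite normrM ger0_norm //.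
case: (boolP (i \in Sret U sel u n w)) => hi.
  by apply: ler_wpM2l => //; apply: ho.
by rewrite qS // !mul0r.
Qed.

Lemma Fhat_mono n w r1 r2 : (forall i, 0 <= q u n i w) -> r1 <= r2 ->
  Fhat E q u n w r1 <= Fhat E q u n w r2.
Proof.
move=> q0 r12; apply: ler_sum => i _; apply: ler_wpM2l => //.
case: (boolP (E (cidx i) w <= r1)) => h1; last by rewrite ler0n.
by rewrite (le_trans h1 r12).
Qed.

Lemma xihat_close n w (p xs eps g : R) :
  (forall i, 0 <= q u n i w) ->
  F u (xs - eps) + g < p -> p <= F u (xs + eps) - g ->
  (Deltan E q F u n w <= g%:E)%E ->
  exists x, xihat E q p u n w = x%:E /\ `|x - xs| <= eps.
Proof.
move=> q0 h1 h2 hD.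
have hr : forall r, `|Fhat E q u n w r - F u r| <= g.
  by move=> r; rewrite -lee_fin; apply: le_trans hD; apply: ereal_sup_ubound; exists r.
have up : (xihat E q p u n w <= (xs + eps)%:E)%E.
  apply: ereal_inf_lbound; exists (xs + eps) => //=.
  have := hr (xs + eps); rewrite ler_norml => /andP[h _]; lra.
have lo : ((xs - eps)%:E <= xihat E q p u n w)%E.
  apply: le_ereal_inf_tmp => _ [r /= hp <-]; rewrite lee_fin.
  rewrite leNgt; apply/negP => hlt.
  have := @Fhat_mono n w _ _ q0 (ltW hlt); have := hr (xs - eps).
  rewrite ler_norml => /andP[_ ?]; lra.
case hom : (xihat E q p u n w) up lo => [x| |] up lo.
- exists x; split => //; rewrite ler_norml; rewrite !lee_fin in up lo.
  apply/andP; split; lra.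
- by move: up; rewrite leye_eq.
- by move: lo; rewrite leeNy_eq.
Qed.

End Core.


Set Implicit Arguments.
Unset Strict Implicit.
Unset Printing Implicit Defensive.

Lemma abs_le_fin (R : realType) (x : \bar R) (a e : R) :
  (`|x - a%:E| <= e%:E)%E -> exists r, x = r%:E /\ `|r - a| <= e.
Proof.
case: x => [r| |].
- by rewrite -EFinB lee_fin => h; exists r.
- by rewrite leye_eq.
- by rewrite leye_eq.
Qed.

Lemma not_lt_le (R : realType) (x : \bar R) (e : R) :
  ~ (e%:E < x)%E -> (x <= e%:E)%E.
Proof. by move=> h; rewrite leNgt; apply/negP. Qed.

Section Outer2.
Variables (R : realType) (dO : measure_display) (Omega : measurableType dO).
Variable (P : probability Omega R).
Local Open Scope ereal_scope.

Lemma outP_mono (A B : set Omega) : A `<=` B -> outP P A <= outP P B.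
Proof.
move=> AB; apply: le_ereal_inf_tmp => _ [C [mC BC] <-].
by apply: outP_le => // w /AB /BC.
Qed.

Lemma outP_ge0 (A : set Omega) : 0 <= outP P A.
Proof. by apply: le_ereal_inf_tmp => _ [C _ <-]; exact: measure_ge0. Qed.

Lemma outP_le1 (A : set Omega) : outP P A <= 1.
Proof. by rewrite -(probability_setT P); apply: outP_le. Qed.

Lemma outP_fin (A : set Omega) : outP P A \is a fin_num.
Proof.
rewrite ge0_fin_numE ?outP_ge0 //; apply: le_lt_trans (outP_le1 A) _.
exact: ltry.
Qed.

Lemma meas_le (f : Omega -> R) (r : R) : measurable_fun setT f ->
  measurable [set w | (f w <= r)%R].
Proof.
move=> hf; have := hf measurableT _ (measurable_itv `]-oo, r]).
by rewrite setTI; congr measurable; apply/seteqP; split => w /=; rewrite in_itv /=.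
Qed.

End Outer2.

Lemma sumq2_gt0 (R : realType) n (qq : 'I_n -> R) :
  \sum_(i < n) qq i = 1 -> 0 < \sum_(i < n) qq i ^+ 2.
Proof.
move=> h; rewrite lt_neqAle sumr_ge0 ?andbT; last by move=> i _; rewrite sqr_ge0.
apply/negP => /eqP /esym /eqP; rewrite psumr_eq0; last by move=> i _; rewrite sqr_ge0.
move=> /allP hz; move: h; rewrite big1 ?(@oner_neq0 R) //.
  by move=> /esym /eqP; rewrite oner_eq0.
move=> i _; have := hz i (mem_index_enum _); rewrite /= sqrf_eq0.
by move=> /eqP.
Qed.

Lemma sandwich (R : realType) (dO : measure_display) (Omega : measurableType dO)
  (Q : probability Omega R) (Es : Omega -> R) (X : nat -> Omega -> \bar R)
  (A : nat -> set Omega) (N : set Omega) (F0 : R -> R) (p xs : R) :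
  measurable_fun setT Es -> measurable N -> Q N = 0%E ->
  (forall r, Q [set w | Es w <= r] = (F0 r)%:E) ->
  (forall e : R, 0 < e -> exists2 del : R, 0 < del &
     forall r, `|r - xs| < del -> `|F0 r - F0 xs| < e) ->
  F0 xs = p ->
  cvg_prob0 Q (fun n w => (X n w - xs%:E)%E) ->
  (forall n w, ~ N w -> (A n w <-> ((Es w)%:E <= X n w)%E)) ->
  (fun n => outP Q (A n)) @ \oo --> p%:E.
Proof.
move=> mEs mN N0 hF hc hxs hX hA.
apply/fine_cvgP; split; first by apply: nearW => n; exact: outP_fin.
apply/cvgrPdist_lt => e e0.
set e4 := e / 4.
have e40 : 0 < e4 by rewrite divr_gt0.
have [del del0 hdel] := hc e4 e40.
set eta := del / 2.
have eta0 : 0 < eta by rewrite divr_gt0.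
have hup : F0 (xs + eta) < p + e4.
  have : `|xs + eta - xs| < del by rewrite addrC addKr gtr0_norm // /eta; lra.
  by move=> /hdel; rewrite hxs ltr_norml => /andP[_ h]; lra.
have hlo : p - e4 < F0 (xs - eta).
  have : `|xs - eta - xs| < del.
    by rewrite addrC addKr normrN gtr0_norm // /eta; lra.
  by move=> /hdel; rewrite hxs ltr_norml => /andP[h _]; lra.
have [M hM] := hX eta e4 eta0 e40.
exists M => // n /= hn.
set B := [set w | (eta%:E < `|X n w - xs%:E|)%E].
have hB := hM n hn.
have closeB : forall w, ~ B w -> exists x, X n w = x%:E /\ `|x - xs| <= eta.
  by move=> w /not_lt_le /abs_le_fin.
have mup := @meas_le _ _ _ Es (xs + eta) mEs.
have mlo := @meas_le _ _ _ Es (xs - eta) mEs.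
have upper : (outP Q (A n) < (p + e4 + e4)%:E)%E.
  apply: (@outP_null _ _ _ Q _ ([set w | Es w <= xs + eta] `|` B) N) => //.
    move=> w hw; case: (pselect (N w)) => hN; [by right | left].
    case: (pselect (B w)) => hb; [by right | left].
    have [x [hx hxx]] := closeB w hb.
    have := (hA n w hN).1 hw; rewrite hx lee_fin /=.
    rewrite ler_norml in hxx; move/andP: hxx => [_ ?] ?; lra.
  apply: (@outP_union _ _ _ Q _ [set w | Es w <= xs + eta] B) => //.
  by apply: (outP_lt_meas mup) => //; rewrite hF lte_fin.
have lower : ((p - 3 * e4)%:E < outP Q (A n))%E.
  rewrite ltNge; apply/negP => hle.
  have h1 : (outP Q (A n) < (p - 2 * e4)%:E)%E.
    by apply: le_lt_trans hle _; rewrite lte_fin; lra.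
  have h2 : (outP Q [set w | (Es w <= xs - eta)%R] < (p - 2 * e4 + e4)%:E)%E.
    apply: (@outP_null _ _ _ Q _ (A n `|` B) N) => //.
      move=> w hw; case: (pselect (N w)) => hN; [by right | left].
      case: (pselect (B w)) => hb; [by right | left].
      have [x [hx hxx]] := closeB w hb.
      apply/(hA n w hN); rewrite hx lee_fin.
      rewrite ler_norml in hxx; move/andP: hxx => [? _]; move: hw => /= ?; lra.
    by apply: (@outP_union _ _ _ Q _ (A n) B).
  have := outP_ge Q mlo; rewrite hF => h3.
  have := le_lt_trans h3 h2; rewrite lte_fin; lra.
have fo := @outP_fin _ _ _ Q (A n).
move: upper lower; rewrite -(fineK fo) !lte_fin => h1 h2.
have he : e = 4 * e4 by rewrite /e4; field.
rewrite ltr_norml; apply/andP; split; lra.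
Qed.

Lemma leeD_shift (R : realType) (y e : R) (X : \bar R) :
  (((y + e)%:E <= y%:E + X) = (e%:E <= X))%E.
Proof.
case: X => [x| |] /=.
- by rewrite -EFinD !lee_fin lerD2l.
- by rewrite !leey.
- by rewrite !leeNy_eq.
Qed.

Unset Implicit Arguments.
Set Strict Implicit.


Theorem mainTheorem1
  (R : realType) (dO : measure_display) (Omega : measurableType dO)
  (P : probability Omega R) (d : nat)
  (U : int -> Omega -> 'rV[R]_d) (E : int -> Omega -> R)
  (Ustar : Omega -> 'rV[R]_d) (Estar : Omega -> R)
  (F : 'rV[R]_d -> R -> R) (K : nat -> nat)
  (sel : 'rV[R]_d -> forall n, ('I_n -> 'rV[R]_d) -> {set 'I_n})
  (q : 'rV[R]_d -> forall n, 'I_n -> Omega -> R)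
  (u : 'rV[R]_d) (p : R)
  (G : nat -> set (set Omega))
  (m : forall n, 'I_n -> R -> Omega -> R)
  (xs : R)
  (* --- standing setting --- *)
  (hUmeas : forall t, rvV (U t))
  (hUsph : forall t w, enorm (U t w) = 1)
  (hEmeas : forall t, measurable_fun setT (E t))
  (hUsmeas : rvV Ustar)
  (hUssph : forall w, enorm (Ustar w) = 1)
  (hEsmeas : measurable_fun setT Estar)
  (hstar_law : forall B C, borelV B -> measurable C ->
     P [set w | B (Ustar w) /\ C (Estar w)] =
     P [set w | B (U 0%R w) /\ C (E 0%R w)])
  (hF_cdf : forall v, is_cdf (F v))
  (hF_meas : forall r B, measurable B -> borelV ((fun v => F v r) @^-1` B))
  (hF_cond : forall r B, borelV B ->
     P [set w | Estar w <= r /\ B (Ustar w)] =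
     (\int[P]_(w in Ustar @^-1` B) (F (Ustar w) r)%:E)%E)
  (hK : exists N, forall n, (N <= n)%N -> (1 <= K n <= n)%N)
  (hsel : topK_rule K sel)
  (hq : weights_ok K U sel q)
  (hu_sph : enorm u = 1)
  (hu_supp : supportV P (U 0%R) u)
  (hp : 0 < p < 1)
  (* --- (A1) stochastic admissibility --- *)
  (hstat : strictly_stationary P U E)
  (hG : forall n,
     [/\ sigma_algebra setT (G n),
         G n `<=` measurable,
         (forall (i : 'I_n) B, borelV B -> G n (U (cidx i) @^-1` B)),
         (forall i : 'I_n, G n [set w | i \in Sret U sel u n w]) &
         (forall i : 'I_n, Gmeas (G n) (q u n i))])
  (hm : forall n (i : 'I_n) r,
     cexp_version P (G n) (fun w => ((E (cidx i) w <= r)%R)%:R) (m n i r))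
  (hD : cvg_prob0 P (Dn U q F m u))
  (hR : bounded_prob P
     (fun n w => (Rn E q m u n w * ((Num.sqrt (sumq2 q u n w))^-1)%:E)%E))
  (* --- (A2) localization and weight size --- *)
  (hKinf : forall M : nat, exists N, forall n, (N <= n)%N -> (M <= K n)%N)
  (hKn : (fun n => (K n)%:R / n%:R : R) @ \oo --> (0:R))
  (hh : cvg_prob0 P (fun n w => (hrad U sel u n w)%:E))
  (hq2 : bounded_prob P (fun n w => ((K n)%:R * sumq2 q u n w)%:E))
  (* --- (A3) local continuity and quantile identification --- *)
  (homega : forall eps : R, 0 < eps -> exists2 delta : R, 0 < delta &
     forall h : R, 0 < h -> h < delta ->
       (omega_mod (supportV P (U 0%R)) F u h < eps%:E)%E)
  (hxs : ereal_inf [set r%:E | r in [set r | p <= F u r]] = xs%:E)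
  (hcont : forall e : R, 0 < e -> exists2 del : R, 0 < del &
     forall r, `|r - xs| < del -> `|F u r - F u xs| < e)
  (hFxs : F u xs = p)
  (hident : forall eps : R, 0 < eps -> F u (xs - eps) < p < F u (xs + eps)) :
  [/\ (forall n, (1 <= K n <= n)%N ->
         {ae P, forall w, (Deltan E q F u n w <=
            Rn E q m u n w + Dn U q F m u n w +
            omega_mod (supportV P (U 0%R)) F u (hrad U sel u n w))%E}),
      bounded_prob P
        (fun n w => (Rn E q m u n w * (Num.sqrt (K n)%:R)%:E)%E),
      cvg_prob0 P (Deltan E q F u),
      cvg_prob0 P (fun n w => (xihat E q p u n w - xs%:E)%E) &
      cvg_prob0 P (fun n w => (F u (fine (xihat E q p u n w)) - p)%:E)]
  /\ (forall kappa : 'rV[R]_d -> probability Omega R,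
        (forall A, measurable A -> forall a : R,
            borelV [set v | (kappa v A < a%:E)%E]) ->
        (forall A B, measurable A -> borelV B ->
            P (A `&` Ustar @^-1` B) =
            (\int[P]_(w in Ustar @^-1` B) kappa (Ustar w) A)%E) ->
        kappa u [set w | Ustar w = u] = 1%E ->
        (forall r, kappa u [set w | Estar w <= r] = (F u r)%:E) ->
        cvg_prob0 (kappa u) (fun n w => (xihat E q p u n w - xs%:E)%E) ->
        ((fun n => outP (kappa u)
             [set w | ((Estar w)%:E <= xihat E q p u n w)%E])
           @ \oo --> p%:E)
        /\
        (forall (alpha : R) (Ystar yhatstar : Omega -> R),
           p = 1 - alpha -> (forall w, Ystar w = yhatstar w + Estar w) ->
           (fun n => outP (kappa u)
             [set w | ((Ystar w)%:E <=
                       (yhatstar w)%:E + xihat E q (1 - alpha) (Ustar w) n w)%E])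
           @ \oo --> (1 - alpha)%:E)).
Proof.
have [NK hNK] := hK.
have hW : forall n, (1 <= K n <= n)%N -> forall w,
  [/\ forall i, 0 <= q u n i w, \sum_(i < n) q u n i w = 1 &
      forall i, i \notin Sret U sel u n w -> q u n i w = 0].
  by move=> n hn w; apply: hq.
set Nv := Nsupp P (U 0%R).
have hNv0 : P (U 0%R @^-1` Nv) = 0%E := Nsupp_null P (hUmeas 0%R).
have hNvk : forall k : nat, P (U (k.+1)%:Z @^-1` Nv) = 0%E.
  move=> k.
  have h : P [set w | forall j : 'I_1, Nv (U 0%R w) /\ [set: R] (E 0%R w)] =
           P [set w | forall j : 'I_1, Nv (U (0 + (k.+1)%:Z)%R w) /\
                                       [set: R] (E (0 + (k.+1)%:Z)%R w)].
    exact: (hstat 1 (fun _ => 0%R) (k.+1)%:Z (fun _ => Nv) (fun _ => setT)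
              (fun _ => borelV_Nsupp P (U 0%R)) (fun _ => measurableT)).
  have e1 : forall t : int, [set w | forall j : 'I_1, Nv (U t w) /\ [set: R] (E t w)]
                          = U t @^-1` Nv.
    move=> t; apply/seteqP; split => w /=; first by move=> /(_ ord0) [].
    by move=> hw j.
  by move: h; rewrite !e1 add0r hNv0 => /esym.
have P1a : forall n, (1 <= K n <= n)%N -> exists2 Nn : set Omega,
    measurable Nn /\ P Nn = 0%E &
    forall w, ~ Nn w -> (Deltan E q F u n w <=
            Rn E q m u n w + Dn U q F m u n w +
            omega_mod (supportV P (U 0%R)) F u (hrad U sel u n w))%E.
  move=> n hn.
  exists (\bigcup_k (U (k.+1)%:Z @^-1` Nv)).
    have mk : forall k : nat, measurable (U (k.+1)%:Z @^-1` Nv).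
      by move=> k; apply: hUmeas; exact: borelV_Nsupp.
    split; first by apply: bigcupT_measurable.
    apply/negligibleP; first by apply: bigcupT_measurable.
    by apply: negligible_bigcup => k; apply/negligibleP => //; exact: hNvk.
  move=> w hw.
  have [q0 q1 qS] := hW n hn w.
  apply: (@Delta_bound _ _ _ _ U E F sel q m u n w _ q0 q1 qS) => //.
  move=> i; apply: contrapT => hi; apply: hw.
  exists i => //=; rewrite /cidx; exact: notsupp_Nsupp (hUmeas 0%R) _ hi.
have hRK : bounded_prob P (fun n w => (Rn E q m u n w * (Num.sqrt (K n)%:R)%:E)%E).
  move=> delta d0.
  have d20 : 0 < delta / 2 by rewrite divr_gt0.
  have [M1 M10 [N1 hN1]] := hR _ d20.
  have [M2 M20 [N2 hN2]] := hq2 _ d20.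
  exists (M1 * Num.sqrt M2); first by rewrite mulr_gt0 ?sqrtr_gt0.
  exists (maxn NK (maxn N1 N2)) => n hn.
  have hn0 : (NK <= n)%N by apply: leq_trans hn; exact: leq_maxl.
  have hn1 : (N1 <= n)%N.
    by apply: leq_trans hn; apply: leq_trans (leq_maxr _ _); exact: leq_maxl.
  have hn2 : (N2 <= n)%N.
    by apply: leq_trans hn; apply: leq_trans (leq_maxr _ _); exact: leq_maxr.
  have key : forall w,
      ~ (M1%:E < `|Rn E q m u n w * ((Num.sqrt (sumq2 q u n w))^-1)%:E|)%E ->
      ~ (M2%:E < `|((K n)%:R * sumq2 q u n w)%:E|)%E ->
      ~ ((M1 * Num.sqrt M2)%:E < `|Rn E q m u n w * (Num.sqrt (K n)%:R)%:E|)%E.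
    move=> w /not_lt_le h1 /not_lt_le h2 h.
    have [q0 q1 qS] := hW n (hNK n hn0) w.
    have s0 : 0 < sumq2 q u n w by apply: sumq2_gt0.
    have ss0 : 0 < Num.sqrt (sumq2 q u n w) by rewrite sqrtr_gt0.
    move: h h1 (@Rn_ge0 _ _ _ _ E q m u n w).
    case: (Rn E q m u n w) => [r| |] h h1 r0.
    - rewrite -EFinM /= lte_fin in h; rewrite -EFinM /= lee_fin in h1.
      rewrite /= lee_fin in h2; rewrite lee_fin in r0.
      rewrite ger0_norm ?mulr_ge0 ?invr_ge0 ?sqrtr_ge0 // in h1.
      rewrite ger0_norm ?mulr_ge0 ?sqrtr_ge0 // in h.
      rewrite ger0_norm ?mulr_ge0 ?sumq2_ge0 // in h2; last first.
        by apply: sumr_ge0 => i _; rewrite sqr_ge0.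
      have e : r * Num.sqrt (K n)%:R =
          (r * (Num.sqrt (sumq2 q u n w))^-1) * Num.sqrt ((K n)%:R * sumq2 q u n w).
        by rewrite sqrtrM ?ler0n //; field; rewrite gt_eqF.
      have : r * Num.sqrt (K n)%:R <= M1 * Num.sqrt M2.
        by rewrite e; apply: ler_pM; rewrite ?mulr_ge0 ?invr_ge0 ?sqrtr_ge0 // ler_sqrt // ltW.
      by rewrite leNgt h.
    - move: h1; rewrite mulyr gtr0_sg ?invr_gt0 // mul1e /=.
      by rewrite leye_eq.
    - by move: r0; rewrite leeNy_eq.
  rewrite (_ : delta = delta / 2 + delta / 2); last by field.
  apply: (outP_union _ (hN1 n hn1) (hN2 n hn2)).
  move=> w /= hw; case: (pselect (M1%:E <
      `|Rn E q m u n w * ((Num.sqrt (sumq2 q u n w))^-1)%:E|)%E) => ha; first by left.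
  right; apply: contrapT => hb; exact: key w ha hb hw.
have hDelta : cvg_prob0 P (Deltan E q F u).
  move=> eps delta e0 d0.
  set e1 := eps / 3.
  have e10 : 0 < e1 by rewrite divr_gt0.
  set d4 := delta / 4.
  have d40 : 0 < d4 by rewrite divr_gt0.
  have [M M0 [N1 hN1]] := hRK _ d40.
  have [k0 hk0] := hKinf (Num.truncn ((M / e1) ^+ 2)).+1.
  have [N3 hN3] := hD e1 d4 e10 d40.
  have [del0 del00 hom] := homega e1 e10.
  set h0 := del0 / 2.
  have h00 : 0 < h0 by rewrite divr_gt0.
  have homh0 : (omega_mod (supportV P (U 0%R)) F u h0 < e1%:E)%E.
    by apply: hom => //; rewrite /h0; lra.
  have [N4 hN4] := hh h0 d4 h00 d40.
  exists (maxn (maxn NK k0) (maxn N1 (maxn N3 N4))) => n hn.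
  have hn0 : (NK <= n)%N by apply: leq_trans hn; rewrite !leq_max leqnn ?orbT.
  have hnk : (k0 <= n)%N by apply: leq_trans hn; rewrite !leq_max leqnn ?orbT.
  have hn1 : (N1 <= n)%N by apply: leq_trans hn; rewrite !leq_max leqnn ?orbT.
  have hn3 : (N3 <= n)%N by apply: leq_trans hn; rewrite !leq_max leqnn ?orbT.
  have hn4 : (N4 <= n)%N by apply: leq_trans hn; rewrite !leq_max leqnn ?orbT.
  have hKn1 := hNK n hn0.
  have [Nn [mN N0] hNn] := P1a n hKn1.
  have sK : M / e1 < Num.sqrt (K n)%:R.
    have hM : 0 < M / e1 by rewrite divr_gt0.
    rewrite -[X in X < _](gtr0_norm hM) -sqrtr_sqr ltr_sqrt ?ltr0n; last first.
      by case/andP: hKn1.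
    apply: lt_le_trans (Num.Theory.truncnS_gt _) _; rewrite ler_nat; exact: hk0.
  have sK0 : 0 < Num.sqrt ((K n)%:R : R).
    have h : 0 < M / e1 by rewrite divr_gt0.
    exact: lt_trans h sK.
  set A1 := [set w | (M%:E < `|Rn E q m u n w * (Num.sqrt (K n)%:R)%:E|)%E].
  set A2 := [set w | (e1%:E < `|Dn U q F m u n w|)%E].
  set A3 := [set w | (h0%:E < `|(hrad U sel u n w)%:E|)%E].
  apply: (@lt_le_trans _ _ ((d4 + d4 + d4)%:E)); last by rewrite lee_fin /d4; lra.
  apply: (@outP_null _ _ _ P _ ((A1 `|` A2) `|` A3) Nn) => //; last first.
    apply: (@outP_union _ _ _ P _ (A1 `|` A2) A3) => //.
      by apply: (@outP_union _ _ _ P _ A1 A2) => //; [exact: hN1 | exact: hN3].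
    exact: hN4.
  move=> w hw; case: (pselect (Nn w)) => hNw; [by right | left].
  case: (pselect (A3 w)) => h3; [by right | left].
  case: (pselect (A2 w)) => h2; [by right | left].
  apply: contrapT => h1; exfalso.
  move/not_lt_le: h1 => h1; move/not_lt_le: h2 => h2; move/not_lt_le: h3 => h3.
  have hb := hNn w hNw.
  have hR1 : (Rn E q m u n w <= e1%:E)%E.
    move: h1 (@Rn_ge0 _ _ _ _ E q m u n w).
    case: (Rn E q m u n w) => [r| |] h1 r0.
    - rewrite -EFinM /= lee_fin in h1; rewrite lee_fin in r0.
      rewrite ger0_norm ?mulr_ge0 ?sqrtr_ge0 // in h1.
      rewrite lee_fin leNgt; apply/negP => hr.
      have : e1 * (M / e1) < r * Num.sqrt (K n)%:R.
        by apply: ltr_pM => //; [exact: ltW | rewrite ltW // divr_gt0].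
      have -> : e1 * (M / e1) = M by field; rewrite gt_eqF.
      by rewrite ltNge h1.
    - by move: h1; rewrite mulyr gtr0_sg // mul1e /= leye_eq.
    - by move: r0; rewrite leeNy_eq.
  have hD1 : (Dn U q F m u n w <= e1%:E)%E.
    by apply: le_trans h2; rewrite gee0_abs // (@Dn_ge0 _ _ _ _ U F q m u n w).
  have hh1 : hrad U sel u n w <= h0.
    by move: h3; rewrite /= lee_fin => /(le_trans (ler_norm _)).
  have hom1 : (omega_mod (supportV P (U 0%R)) F u (hrad U sel u n w) <=
               omega_mod (supportV P (U 0%R)) F u h0)%E.
    apply: ereal_sup_le => _ [vr [hs hv] <-]; exists vr => //; split => //.
    exact: le_trans hv hh1.
  move: hw => /=; rewrite gee0_abs ?(@Deltan_ge0 _ _ _ _ E F q u n w) //.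
  apply/negP; rewrite -leNgt.
  apply: le_trans hb _.
  have -> : eps = e1 + e1 + e1 by rewrite /e1; field.
  rewrite !EFinD; apply: leeD; first exact: leeD.
  exact: le_trans hom1 (ltW homh0).
have hclose : forall e' delta : R, 0 < e' -> 0 < delta -> exists N, forall n, (N <= n)%N ->
   (outP P [set w | ~ (exists x, xihat E q p u n w = x%:E /\ (`|x - xs| <= e')%R)] < delta%:E)%E.
  move=> e' delta e0 d0.
  case/andP: (hident e' e0) => h1 h2.
  set g := Num.min (p - F u (xs - e')) (F u (xs + e') - p) / 2.
  have m1 : Num.min (p - F u (xs - e')) (F u (xs + e') - p) <= p - F u (xs - e').
    by rewrite ge_min lexx.
  have m2 : Num.min (p - F u (xs - e')) (F u (xs + e') - p) <= F u (xs + e') - p.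
    by rewrite ge_min lexx orbT.
  have m0 : 0 < Num.min (p - F u (xs - e')) (F u (xs + e') - p).
    by rewrite lt_min !subr_gt0 h1 h2.
  have g0 : 0 < g by rewrite divr_gt0.
  have hg1 : F u (xs - e') + g < p by rewrite /g; lra.
  have hg2 : p <= F u (xs + e') - g by rewrite /g; lra.
  have [N hN] := hDelta g delta g0 d0.
  exists (maxn NK N) => n hn.
  have hn0 : (NK <= n)%N by apply: leq_trans hn; rewrite !leq_max leqnn ?orbT.
  have hnN : (N <= n)%N by apply: leq_trans hn; rewrite !leq_max leqnn ?orbT.
  apply: (le_lt_trans _ (hN n hnN)); apply: outP_mono => w /= hw.
  apply: contrapT => hgw; apply: hw.
  have [q0 _ _] := hW n (hNK n hn0) w.
  apply: (@xihat_close _ _ _ _ E F q u n w p xs e' g q0 hg1 hg2).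
  by move/not_lt_le: hgw; rewrite gee0_abs // (@Deltan_ge0 _ _ _ _ E F q u n w).
split.
  split.
  - move=> n hn; have [Nn [mN N0] hN] := P1a n hn.
    exists Nn; split => // w /= hw; apply: contrapT => h; exact: hw (hN w h).
  - exact: hRK.
  - exact: hDelta.
  - move=> eps delta e0 d0.
    have [N hN] := hclose (eps / 2) delta (divr_gt0 e0 (ltr0Sn _ 1)) d0.
    exists N => n hn; apply: (le_lt_trans _ (hN n hn)); apply: outP_mono.
    move=> w /= hw [x [hx hxx]]; move: hw; rewrite hx -EFinB /= lte_fin => hw.
    lra.
  - move=> eps delta e0 d0.
    have [del del0 hdel] := hcont eps e0.
    have [N hN] := hclose (del / 2) delta (divr_gt0 del0 (ltr0Sn _ 1)) d0.
    exists N => n hn; apply: (le_lt_trans _ (hN n hn)); apply: outP_mono.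
    move=> w /= hw [x [hx hxx]]; move: hw; rewrite hx /= lte_fin => hw.
    have : `|x - xs| < del by apply: le_lt_trans hxx _; lra.
    move=> /hdel; rewrite hFxs; lra.
move=> kappa hk1 hk2 hk3 hk4 hk5.
have mS : measurable [set w | Ustar w = u] := hUsmeas _ (borelV_set1 u).
split.
  apply: (@sandwich _ _ _ (kappa u) Estar (xihat E q p u) _ set0 (F u) p xs) => //.
move=> alpha Ystar yhat hpa hY.
rewrite -hpa.
apply: (@sandwich _ _ _ (kappa u) Estar (xihat E q p u) _
          (~` [set w | Ustar w = u]) (F u) p xs) => //.
- exact: measurableC.
- by rewrite probability_setC // hk3 subee.
- move=> n w /= hN.
  have hU : Ustar w = u by apply: contrapT.
  by rewrite hU hY leeD_shift.
Qed.
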